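(* Let $\Lambda$ be a real interval, let $w_i\ge0$ with $\sum_iw_i=1$, and let $\psi$ be the weighted-proportional-cumulative with weights $\mathbf w$. Let $p_1,\dots,p_n\in\mathcal P$ have continuous CDFs $P_1,\dots,P_n$ with densities (also denoted $p_i$) and suppose $P_1\ge P_2\ge\dots\ge P_n$ pointwise. Writing $W_i=\sum_{k\le i}w_k$ ($W_0=0$), the output $\psi(\mathbf p)$ has density given (almost everywhere) by $$\psi(\mathbf p)(a)=\begin{cases}p_i(a)&\text{if }W_{i-1}\le P_i(a)<W_i\text{ for some }i\in N,\\ 0&\text{otherwise.}\end{cases}$$
   Context: $N=\{1,\dots,n\}$; $\mathcal P$ the Borel probability measures on $\Lambda$, $\mathcal C$ the CDFs, $\pi(p)(a)=p(\{x\in\Lambda:x\le a\})$. The weighted-proportional-cumulative with weights $\mathbf w$ is the PAF $\psi:\mathcal P^N\to\mathcal P$ whose associated CAF $\Psi$ (defined by $\Psi(\pi(p_1),\dots,\pi(p_n))=\pi(\psi(p_1,\dots,p_n))$) is $\Psi(\mathbf P)(a)=\mu_{\mathbf w}(P_1(a),\dots,P_n(a))$, where $\mu_{\mathbf w}(\mathbf r)=\sup\{y\in[0,1]:\sum_{i:\,r_i\ge y}w_i\ge y\}$. *)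

(* Defs.v *)
From HB Require Import structures.
From mathcomp Require Import all_boot all_order all_algebra.
From mathcomp Require Import all_classical all_reals all_analysis.
Set Implicit Arguments. Unset Strict Implicit. Unset Printing Implicit Defensive.
Import Order.TTheory GRing.Theory Num.Theory.
Local Open Scope classical_set_scope.
Local Open Scope ring_scope.

(* Borel probability measures on Lambda are represented as Borel probability
   measures on R concentrated on Lambda. *)
Definition concentrated (R : realType) (Lam : set R)
  (p : set (measurableTypeR R) -> \bar R) : Prop :=
  p (~` Lam) = 0%E.

Definition cdfL (R : realType) (p : set (measurableTypeR R) -> \bar R) (a : R) : R :=
  fine (p [set x : R | x <= a]).

Definition mu_w (R : realType) (n : nat) (w : 'I_n -> R) (r : 'I_n -> R) : R :=
  sup [set y : R | 0 <= y <= 1 /\ y <= \sum_(i < n | y <= r i) w i].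

Definition wpc_caf (R : realType) (n : nat) (w : 'I_n -> R)
  (P : 'I_n -> R -> R) (a : R) : R := mu_w w (fun i => P i a).

(* W_i = sum_{k <= i} w_k  (with 0-based indices: Wle i = sum_{k <= i},
   Wlt i = sum_{k < i} = W_{i-1}) *)
Definition Wle (R : realType) (n : nat) (w : 'I_n -> R) (i : 'I_n) : R :=
  \sum_(k < n | (k <= i)%N) w k.
Definition Wlt (R : realType) (n : nat) (w : 'I_n -> R) (i : 'I_n) : R :=
  \sum_(k < n | (k < i)%N) w k.

Definition has_density (R : realType) (Lam : set R)
  (p : set (measurableTypeR R) -> \bar R) (f : R -> R) : Prop :=
  measurable_fun setT f /\ (forall x, 0 <= f x) /\
  forall A : set (measurableTypeR R), measurable A -> A `<=` Lam ->
    p A = (\int[lebesgue_measure]_(x in A) (f x)%:E)%E.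

(* Main.v *)
Require Import Defs.
From HB Require Import structures.
From mathcomp Require Import all_boot all_order all_algebra.
From mathcomp Require Import all_classical all_reals all_analysis.
From mathcomp Require Import lra measurable_realfun.
Import Order.TTheory GRing.Theory Num.Theory.
Import numFieldNormedType.Exports.
Local Open Scope classical_set_scope.
Local Open Scope ring_scope.




Section Alg.
Variable R : realType.

Definition Wn (w : nat -> R) (k : nat) : R := \sum_(j < k) w j.

Lemma WnS w k : Wn w k.+1 = Wn w k + w k.
Proof. by rewrite /Wn big_ord_recr. Qed.

Lemma Wn0 w : Wn w 0 = 0.
Proof. by rewrite /Wn big_ord0. Qed.

Lemma Wn_ge0 w : (forall k, 0 <= w k) -> forall k, 0 <= Wn w k.
Proof. by move=> w0 k; apply: sumr_ge0 => i _. Qed.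

Lemma Wn_le w : (forall k, 0 <= w k) -> forall i j, (i <= j)%N -> Wn w i <= Wn w j.
Proof.
move=> w0 i j /subnK <-; elim: (j - i)%N => [|k IH]; first by rewrite add0n.
by rewrite addSn WnS (le_trans IH)// lerDl.
Qed.

Lemma key_nat (n : nat) (w r : nat -> R) :
  (forall k, 0 <= w k) -> (forall k, (k < n)%N -> 0 <= r k) ->
  (forall i j, (i <= j)%N -> (j < n)%N -> r j <= r i) ->
  forall m, (m <= n)%N ->
   let V := \sum_(i < m) (Num.min (r i) (Wn w i.+1) - Num.min (r i) (Wn w i)) in
   V <= Wn w m /\ ((0 < m)%N -> Num.min (r m.-1) (Wn w m) <= V) /\
   (forall i, (i < m)%N -> Num.min (r i) (Wn w i.+1) <= V) /\
   (V = 0 \/ exists2 i, (i < m)%N & V = Num.min (r i) (Wn w i.+1)).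
Proof.
move=> w0 r0 rdec; elim=> [_|m IH] /=.
  rewrite big_ord0 Wn0; split=> //; split=> //; split=> //; by left.
move=> mn; have mn' : (m <= n)%N by apply: ltnW.
move: (IH mn') => /= [I1 [I2 [I3 I4]]].
rewrite big_ord_recr /=.
set V := \sum_(i < m) _ in I1 I2 I3 I4 *.
have WS := WnS w m; have Wle := @Wn_le w w0.
have Wm0 := @Wn_ge0 w w0 m.
have rm0 : 0 <= r m by apply: r0.
case: (leP (Wn w m) (r m)) => hm.
- have VW : V = Wn w m.
    apply/le_anti; rewrite I1 /=.
    have [m0|m0] := posnP m.
      by rewrite /V m0 big_ord0 Wn0.
    apply: le_trans (I2 m0); rewrite min_r//=.
    by apply: le_trans hm _; apply: rdec => //; rewrite leq_pred.
  rewrite VW addrCA subrr addr0.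
  have hmu : Wn w m <= Num.min (r m) (Wn w m.+1).
    by rewrite le_min hm WS lerDl w0.
  split; first by rewrite ge_min lexx orbT.
  split; first by move=> _ /=.
  split; last by right; exists m.
  move=> i; rewrite ltnS leq_eqVlt => /orP[/eqP->//|im].
  by apply: le_trans (I3 _ im) _; rewrite VW.
- have m0 : (0 < m)%N.
    have [m0|//] := posnP m.
    by move: hm rm0; rewrite m0 Wn0 ltNge => /negP H /H.
  have hm' : r m < Wn w m.+1 by apply: lt_le_trans hm _; rewrite WS lerDl w0.
  rewrite (min_l (ltW hm')) subrr addr0.
  have rV : r m <= V.
    apply: le_trans (I2 m0); rewrite le_min (ltW hm) andbT.
    by apply: rdec => //; rewrite leq_pred.
  split; first by rewrite (le_trans I1)// WS lerDl w0.
  split; first by move=> _ /=.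
  split => //.
  move=> i; rewrite ltnS leq_eqVlt => /orP[/eqP->|im]; first by rewrite (min_l (ltW hm')).
  exact: I3.
  case: I4 => [->|[i im ->]]; [by left| by right; exists i => //; apply: ltnW].
Qed.


Lemma mu_w_eq n (w r : 'I_n -> R) :
  (forall i, 0 <= w i) -> \sum_i w i = 1 -> (forall i, 0 <= r i) ->
  (forall i j : 'I_n, (i <= j)%N -> r j <= r i) ->
  mu_w w r = \sum_i (Num.min (r i) (Wle w i) - Num.min (r i) (Wlt w i)).
Proof.
case: n w r => [|n'] w r w0 w1 r0 rdec.
  by move: w1; rewrite big_ord0 => /eqP; rewrite eq_sym oner_eq0.
pose wn k := if (k < n'.+1)%N then w (inord k) else 0.
pose rn k := r (inord k).
have wnE (i : 'I_n'.+1) : wn (val i) = w i by rewrite /wn ltn_ord inord_val.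
have wn0 k : 0 <= wn k by rewrite /wn; case: ifP.
have WltE (i : 'I_n'.+1) : Wlt w i = Wn wn i.
  rewrite /Wn (big_ord_widen n'.+1 wn (ltnW (ltn_ord i))) /Wlt.
  by apply: eq_bigr => k _; rewrite wnE.
have WleE (i : 'I_n'.+1) : Wle w i = Wn wn i.+1.
  rewrite /Wn (big_ord_widen n'.+1 wn (ltn_ord i)) /Wle.
  by apply: eq_bigr => k _; rewrite wnE.
have rn0 k : (k < n'.+1)%N -> 0 <= rn k by move=> _; apply: r0.
have rndec i j : (i <= j)%N -> (j < n'.+1)%N -> rn j <= rn i.
  move=> ij jn; apply: rdec; rewrite !inordK//; exact: leq_ltn_trans jn.
have := @key_nat n'.+1 wn rn wn0 rn0 rndec n'.+1 (leqnn _).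
set V := \sum_(i < n'.+1) _ => -[I1 [I2 [I3 I4]]].
have -> : \sum_i (Num.min (r i) (Wle w i) - Num.min (r i) (Wlt w i)) = V.
  by apply: eq_bigr => i _; rewrite WltE WleE /rn inord_val.
have Wtot : Wn wn n'.+1 = 1 by rewrite -w1; apply: eq_bigr => i _; rewrite wnE.
set E := [set y : R | 0 <= y <= 1 /\ y <= \sum_(i < n'.+1 | y <= r i) w i].
have V0 : 0 <= V.
  case: I4 => [->//|[i il ->]]; by rewrite le_min rn0 // (@Wn_ge0 wn wn0).
have EV : E V.
  split; first by rewrite V0 -Wtot.
  case: I4 => [->|[k kn Vk]]; first by apply: sumr_ge0.
  rewrite [X in X <= _]Vk ge_min; apply/orP; right.
  rewrite -(WleE (Ordinal kn)) /Wle big_mkcond [X in _ <= X]big_mkcond /=; apply: ler_sum => i _.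
  case: ifP => ik; last by case: ifP.
  rewrite ifT//; rewrite Vk ge_min; apply/orP; left; rewrite /rn.
  have -> : inord k = Ordinal kn :> 'I_n'.+1 by apply/val_inj; rewrite /= inordK.
  exact: rdec.
have ubV : ubound E V.
  move=> y [/andP[y0 y1] ysum].
  have [[i0 Hi0]|Hno] := pselect (exists i, y <= r i).
    case: (@arg_maxnP _ i0 (fun i => y <= r i) (fun i => nat_of_ord i) Hi0) => k yk kmax.
    have : \sum_(i < n'.+1 | y <= r i) w i = Wle w k.
      apply: eq_bigl => i; apply/idP/idP => [/kmax//|ik].
      exact: le_trans yk (rdec _ _ ik).
    move=> eqs; rewrite eqs WleE in ysum.
    apply: le_trans (I3 k (ltn_ord k)); rewrite le_min ysum andbT /rn inord_val//.
  have : \sum_(i < n'.+1 | y <= r i) w i = 0.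
    by apply: big1 => i yi; exfalso; apply: Hno; exists i.
  by move=> e; rewrite e in ysum; apply: le_trans ysum V0.
rewrite /mu_w -/E; apply/le_anti/andP; split.
  by apply: ge_sup => //; exists V.
apply: sup_upper_bound => //; split; first by exists V.
by exists 1 => y [/andP[_ ?] _].
Qed.

End Alg.



Section OneM.
Context {R : realType} (Lam : set R) (p : probability (measurableTypeR R) R) (f : R -> R).
Hypotheses (LamI : is_interval Lam) (conc : concentrated Lam p) (hd : has_density Lam p f).
Local Notation F := (cdfL p).

Lemma pleE a : p `]-oo, a]%classic = (F a)%:E.
Proof. by rewrite /cdfL set_itvNyc fineK// fin_num_measure//= -set_itvNyc. Qed.

Lemma F_ge0 a : 0 <= F a.
Proof. by rewrite -lee_fin -pleE measure_ge0. Qed.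

Lemma F_le1 a : F a <= 1.
Proof. by rewrite -lee_fin -pleE probability_le1. Qed.

Lemma F_nd : {homo F : x y / x <= y}.
Proof.
move=> x y xy; rewrite -lee_fin -!pleE le_measure ?inE//.
exact: subitvPr.
Qed.

Lemma pIoc a b : a <= b -> p `]a, b]%classic = (F b - F a)%:E.
Proof.
move=> ab.
have -> : `]a, b]%classic = `]-oo, b] `\` `]-oo, a] :> set (measurableTypeR R).
  by rewrite -[RHS]setCK setCD setCitvl setUC -[LHS]setCK setCitv.
rewrite measureD//=.
  by rewrite setIidr ?pleE ?EFinB //; exact: subset_itvl.
by rewrite pleE ltry.
Qed.

Lemma Lam_meas : measurable Lam.
Proof. exact: is_interval_measurable. Qed.

Lemma conc_I (A : set (measurableTypeR R)) : measurable A -> p (A `&` Lam) = p A.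
Proof.
move=> mA; rewrite [in RHS](measureDI p mA Lam_meas).
rewrite [X in _ = (X + _)%E](_ : _ = 0%E) ?add0e//.
apply/le_anti; rewrite measure_ge0 andbT -conc le_measure ?inE//.
all: first [by move=> x [] | by apply: measurableD => //; exact: Lam_meas | by apply: measurableC; exact: Lam_meas].
Qed.

Lemma atom0 x : p [set x] = 0%E.
Proof.
have [Lx|nLx] := pselect (Lam x).
  have [mf [_ hA]] := hd.
  rewrite hA//; last by move=> y ->.
  apply: null_set_integral => //.
    apply/measurable_EFinP; exact: measurable_funTS.
  exact: lebesgue_measure_set1.
apply/le_anti; rewrite measure_ge0 andbT -conc le_measure ?inE//.
all: first [by move=> y -> | by apply: measurableC; exact: Lam_meas].
Qed.


Let idTR : measurableTypeR R -> R := idfun.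
#[local] HB.instance Definition _ :=
  @isMeasurableFun.Build _ _ _ _ idTR (@measurable_id _ _ setT).

Lemma F_small c : 0 < c -> exists x, F x < c.
Proof.
move=> c0.
have h := cvg_cdfNy0 (idTR : {RV p >-> R}).
have e : cdf (idTR : {RV p >-> R}) = fun r => (F r)%:E.
  by apply/funext => r; rewrite /cdf /distribution /pushforward preimage_id pleE.
rewrite e in h; move/fine_cvgP: h => [_ h].
have H := cvgr_lt 0 h c c0.
have [x Hx] := filter_ex (H (ltac:(apply: filter_filter))).
by exists x.
Qed.

Lemma F_cont : continuous F.
Proof.
move=> x; apply/cvgrPdist_lt => e e0.
pose d k : R := k.+1%:R^-1.
have d0 k : 0 < d k by rewrite /d invr_gt0.
pose B k := `]x - d k, x + d k]%classic : set (measurableTypeR R).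
have Bcap : \bigcap_k B k = [set x].
  apply/seteqP; split => [y hy|y ->]; last first.
    move=> k _; rewrite /B /= in_itv /=; apply/andP; split.
      by rewrite ltrBlDr ltrDl.
    by rewrite lerDl ltW.
  have hk k : x - d k < y <= x + d k by have := hy k I; rewrite /B /= in_itv.
  apply/le_anti/andP; split.
    apply/ler_addgt0Pr => r r0.
    have := hk (Num.Def.trunc r^-1); case/andP => _ h; apply: le_trans h _.
    rewrite lerD2l /d; apply/ltW; rewrite invf_plt ?posrE// ?ltr0n//.
    exact: truncnS_gt.
  apply/ler_addgt0Pr => r r0.
  have := hk (Num.Def.trunc r^-1); case/andP => h _.
  rewrite -lerBlDr; apply/ltW; apply: le_lt_trans h; rewrite lerB//.
  rewrite /d; apply/ltW; rewrite invf_plt ?posrE// ?ltr0n//.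
  exact: truncnS_gt.
have pB k : p (B k) = (F (x + d k) - F (x - d k))%:E.
  by apply: pIoc; rewrite lerD2l -(lerN2) opprK; apply/ltW; rewrite gtrN.
have hc : (p \o B) k @[k --> \oo] --> p (\bigcap_k B k).
  apply: nonincreasing_cvg_mu.
  - by apply: (le_lt_trans (probability_le1 p _)); [exact: measurable_itv | rewrite ltey].
  - by move=> i; exact: measurable_itv.
  - by rewrite Bcap; exact: measurable_set1.
  - move=> m n mn; apply/subsetPset => y; rewrite /B /= !in_itv /= => /andP[h1 h2].
    have dd : d n <= d m by rewrite /d lef_pV2 ?posrE// ler_nat.
    apply/andP; split; [apply: le_lt_trans h1; rewrite lerB //| apply: le_trans h2 _; rewrite lerD2l//].
rewrite Bcap atom0 in hc.
have e2 : p \o B = fun k => (F (x + d k) - F (x - d k))%:E by apply/funext => k /=; rewrite pB.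
rewrite e2 in hc; move/fine_cvgP: hc => [_ hc].
have H := cvgr_lt 0 hc e e0.
have [k /= hkE] := filter_ex (H (ltac:(apply: filter_filter))).
apply/nbhs_ballP; exists (d k) => //= y; rewrite /ball /= => hy.
move: hy; rewrite ltr_distlC => /andP[hy1 hy2].
have a1 := F_nd _ _ (ltW hy1); have a2 := F_nd _ _ (ltW hy2).
have dk0 := d0 k.
have a3 : F (x - d k) <= F x by apply: F_nd; lra.
have a4 : F x <= F (x + d k) by apply: F_nd; lra.
rewrite ltr_norml; apply/andP; split; lra.
Qed.


Lemma mFlt c : measurable [set x : measurableTypeR R | F x < c].
Proof.
apply: is_interval_measurable => x y _ hy z /andP[_ zy].
exact: le_lt_trans (F_nd _ _ zy) hy.
Qed.

Lemma F_hit v b : 0 < v <= F b -> exists s, s <= b /\ F s = v.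
Proof.
case/andP => v0 vb.
have [x0 hx0] := F_small v v0.
have x0b : x0 <= b.
  rewrite leNgt; apply/negP => bx0.
  have := F_nd _ _ (ltW bx0); lra.
have Fx0b := F_nd _ _ x0b.
have hv : Num.min (F x0) (F b) <= v <= Num.max (F x0) (F b).
  by rewrite (min_l Fx0b) (max_r Fx0b) (ltW hx0) vb.
have [s] := @IVT R F x0 b v x0b (continuous_subspaceT F_cont) hv.
by rewrite in_itv /= => /andP[_ sb] Fs; exists s.
Qed.

Lemma Kc b c : 0 <= c ->
  p ([set x : measurableTypeR R | x <= b] `&` [set x | F x < c]) = (Num.min (F b) c)%:E.
Proof.
move=> c0.
have [Fbc|cFb] := ltP (F b) c.
  have -> : [set x : measurableTypeR R | x <= b] `&` [set x | F x < c] = `]-oo, b]%classic.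
    rewrite set_itvNyc; apply/seteqP; split=> [y [yb _] //| y /= yb]; split => //.
    exact: le_lt_trans (F_nd _ _ yb) Fbc.
  by rewrite pleE.
have -> : [set x : measurableTypeR R | x <= b] `&` [set x | F x < c] = [set x | F x < c].
  apply/seteqP; split=> [y [] //| y /= yc]; split => //=.
  rewrite leNgt; apply/negP => by_.
  have := F_nd _ _ (ltW by_); lra.
have [c00|cne] := eqVneq c 0.
  rewrite c00.
  have -> : [set x : measurableTypeR R | F x < 0] = set0.
    by apply/seteqP; split => y //=; rewrite ltNge F_ge0.
  by rewrite measure0.
have cpos : 0 < c by rewrite lt_neqAle eq_sym cne c0.
have mD := mFlt c.
have fD : p [set x | F x < c] = (fine (p [set x | F x < c]))%:E.
  by rewrite fineK// fin_num_measure.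
rewrite fD; congr (_%:E).
set z := fine _.
have [s [sb Fs]] := @F_hit c b ltac:(by rewrite cpos cFb).
have zc : z <= c.
  have : (p [set x | (F x < c)%R] <= p `]-oo, s]%classic)%E.
    apply: le_measure; rewrite ?inE//.
    move=> y /= yc; rewrite in_itv /= leNgt; apply/negP => sy.
    have := F_nd _ _ (ltW sy); lra.
  by rewrite fD pleE Fs lee_fin.
apply/le_anti; rewrite zc /=.
rewrite leNgt; apply/negP => zlt.
pose m := Num.max z 0.
have hm1 : z <= m by rewrite le_max lexx.
have hm2 : 0 <= m by rewrite le_max lexx orbT.
have hm3 : m < c by rewrite gt_max zlt cpos.
pose c' := (m + c) / 2.
have c'1 : z < c' by rewrite /c'; lra.
have c'2 : 0 < c' by rewrite /c'; lra.
have c'3 : c' < c by rewrite /c'; lra.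
have [s' [s'b Fs']] := @F_hit c' b ltac:(rewrite c'2 /=; lra).
have : (p `]-oo, s']%classic <= p [set x | (F x < c)%R])%E.
  apply: le_measure; rewrite ?inE//.
  move=> y; rewrite /= in_itv /= => ys.
  have := F_nd _ _ ys; lra.
rewrite fD pleE Fs' lee_fin -/z.
lra.
Qed.


Lemma F_above b : (forall x, Lam x -> x <= b) -> F b = 1.
Proof.
move=> hb; apply/le_anti; rewrite F_le1 /= -lee_fin -pleE.
have <- : p Lam = 1%E.
  by rewrite -[Lam]setTI conc_I// probability_setT.
apply: le_measure; rewrite ?inE//.
all: first [exact: Lam_meas | by move=> y Ly; rewrite /= in_itv /= hb].
Qed.

Lemma F_below b : (forall x, Lam x -> b < x) -> F b = 0.
Proof.
move=> hb; apply/le_anti; rewrite F_ge0 andbT.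
rewrite -lee_fin -pleE -conc_I//.
have -> : `]-oo, b]%classic `&` Lam = set0 :> set (measurableTypeR R).
  apply/seteqP; split => // y []; rewrite /= in_itv /= => yb /hb; lra.
by rewrite measure0.
Qed.

Lemma pSeg b c1 c2 : 0 <= c1 -> c1 <= c2 ->
  p (`]-oo, b]%classic `&` [set x : measurableTypeR R | Lam x /\ c1 <= F x /\ F x < c2]) =
  (Num.min (F b) c2 - Num.min (F b) c1)%:E.
Proof.
move=> c10 c12.
set U := [set x : measurableTypeR R | x <= b] `&` [set x | F x < c2].
set V := [set x : measurableTypeR R | x <= b] `&` [set x | F x < c1].
have mU : measurable U by apply: measurableI; [rewrite -set_itvNyc; exact: measurable_itv| exact: mFlt].
have mV : measurable V by apply: measurableI; [rewrite -set_itvNyc; exact: measurable_itv| exact: mFlt].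
have -> : `]-oo, b]%classic `&` [set x : measurableTypeR R | Lam x /\ c1 <= F x /\ F x < c2]
    = (U `\` V) `&` Lam.
  apply/seteqP; split => y /=.
    rewrite in_itv /= => -[yb [Ly [h1 h2]]]; split => //; split => //.
    by rewrite /V => -[_ /= h]; lra.
  move=> [[[yb h2] nV] Ly]; rewrite in_itv /= yb; split => //; split => //; split => //.
  rewrite leNgt; apply/negP => h; by apply: nV.
rewrite conc_I; last exact: measurableD.
rewrite measureD//; last by apply: (le_lt_trans (probability_le1 p mU)); rewrite ltey.
have -> : U `&` V = V.
  apply/seteqP; split => y; first by move=> [].
  by move=> [yb h]; split => //; split => //=; move: h => /=; lra.
have k2 : p U = (Num.min (F b) c2)%:E by apply: Kc; exact: le_trans c12.
have k1 : p V = (Num.min (F b) c1)%:E by apply: Kc.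
rewrite EFinB; congr (_ - _)%E; [exact: k2 | exact: k1].
Qed.

End OneM.



Section U.
Context {R : realType}.

Lemma Ioc_of (m : {measure set (measurableTypeR R) -> \bar R}) (G : R -> R) :
  (forall x, m `]-oo, x]%classic = (G x)%:E) ->
  forall a b, a <= b -> m `]a, b]%classic = (G b - G a)%:E.
Proof.
move=> mG a b ab.
have -> : `]a, b]%classic = `]-oo, b] `\` `]-oo, a] :> set (measurableTypeR R).
  by rewrite -[RHS]setCK setCD setCitvl setUC -[LHS]setCK setCitv.
rewrite measureD//=.
  by rewrite setIidr ?mG ?EFinB //; exact: subset_itvl.
by rewrite mG ltry.
Qed.

Lemma cdf_unique (m1 m2 : {measure set (measurableTypeR R) -> \bar R}) (G : R -> R) :
  (forall x, m1 `]-oo, x]%classic = (G x)%:E) ->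
  (forall x, m2 `]-oo, x]%classic = (G x)%:E) ->
  forall A, measurable A -> m1 A = m2 A.
Proof.
move=> h1 h2 A mA.
apply: (measure_unique (R.-ocitv.-measurable : set (set (measurableTypeR R)))
   (fun k : nat => `]-k%:R, k%:R]%classic)) => //.
- by move=> X Y; exact: measurableI.
- by move=> k; exact: is_ocitv.
- apply/seteqP; split => // y _.
  exists (Num.Def.trunc `|y|).+1 => //=.
  have := truncnS_gt `|y|; rewrite ltr_norml => /andP[k1 k2].
  by rewrite in_itv /= k1 (ltW k2).
- move=> X [[a b] _ <-] /=.
  have [ab|ba] := leP a b; first by rewrite (Ioc_of _ _ h1 _ _ ab) (Ioc_of _ _ h2 _ _ ab).
  by rewrite set_itv_ge ?measure0// bnd_simp -leNgt ltW.
- move=> k; rewrite (Ioc_of _ _ h1) ?ltry//.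
  by apply: (@le_trans _ _ 0); rewrite ?oppr_le0 ?ler0n.
Qed.
End U.



Theorem aux (R : realType) (Lam : set R) (n : nat)
  (w : 'I_n.+1 -> R) (p : 'I_n.+1 -> probability (measurableTypeR R) R)
  (dens : 'I_n.+1 -> R -> R) (q : probability (measurableTypeR R) R) :
  is_interval Lam ->
  (forall i, 0 <= w i) -> \sum_(i < n.+1) w i = 1 ->
  (forall i, concentrated Lam (p i)) ->
  (forall i, {within Lam, continuous (cdfL (p i))}) ->
  (forall i, has_density Lam (p i) (dens i)) ->
  (forall a, Lam a -> forall i j : 'I_n.+1, (i <= j)%N -> cdfL (p j) a <= cdfL (p i) a) ->
  concentrated Lam q ->
  (forall a, Lam a -> cdfL q a = wpc_caf w (fun i => cdfL (p i)) a) ->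
  exists g : R -> R, has_density Lam q g /\
    {ae lebesgue_measure, forall a : R, Lam a ->
       (forall i, Wlt w i <= cdfL (p i) a < Wle w i -> g a = dens i a) /\
       ((forall i, ~ (Wlt w i <= cdfL (p i) a < Wle w i)) -> g a = 0)}.
Proof.
move=> LamI w0 w1 conc _ hd mono qconc qcdf.
have Wlt0 i : 0 <= Wlt w i by apply: sumr_ge0.
have WltWle i : Wlt w i <= Wle w i.
  rewrite /Wlt /Wle big_mkcond [X in _ <= X]big_mkcond /=; apply: ler_sum => k _.
  case: ifP => ki; first by rewrite ifT // ltnW.
  by case: ifP.
have WleWlt (i j : 'I_n.+1) : (i < j)%N -> Wle w i <= Wlt w j.
  move=> ij; rewrite /Wlt /Wle big_mkcond [X in _ <= X]big_mkcond /=; apply: ler_sum => k _.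
  case: ifP => ki; first by rewrite ifT //; exact: leq_ltn_trans ki ij.
  by case: ifP.
have Wle1 i : Wle w i <= 1.
  rewrite -w1 /Wle big_mkcond /=; apply: ler_sum => k _.
  by case: ifP.
have WleE i : Wle w i = Wlt w i + w i.
  rewrite /Wle (bigD1 i) //= addrC; congr (_ + _).
  by apply: eq_bigl => k; rewrite ltn_neqAle andbC.
have Wle0 i : 0 <= Wle w i by apply: le_trans (WltWle i).
have mS i : measurable [set x : measurableTypeR R | Lam x /\ Wlt w i <= cdfL (p i) x /\ cdfL (p i) x < Wle w i].
  apply: is_interval_measurable => x y [Lx [a1 a2]] [Ly [b1 b2]] z /andP[xz zy].
  split; first by apply: (LamI x y) => //; rewrite xz zy.
  have := F_nd (p i) _ _ xz; have := F_nd (p i) _ _ zy; move=> c1 c2.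
  split; lra.
set S := fun i => [set x : measurableTypeR R | Lam x /\ Wlt w i <= cdfL (p i) x /\ cdfL (p i) x < Wle w i].
pose nu := msum (fun k => mrestr (p (inord k)) (mS (inord k))) n.+1.
have nuE A : nu A = \sum_(i < n.+1) p i (A `&` S i).
  by rewrite /nu /msum; apply: eq_bigr => i _; rewrite /mrestr inord_val.
pose Phi b := \sum_(i < n.+1) (Num.min (cdfL (p i) b) (Wle w i) - Num.min (cdfL (p i) b) (Wlt w i)).
have nu_cdf b : nu `]-oo, b]%classic = (Phi b)%:E.
  rewrite nuE /Phi -sumEFin; apply: eq_bigr => i _.
  exact: (pSeg Lam (p i) (dens i) LamI (conc i) (hd i) b _ _ (Wlt0 i) (WltWle i)).
have Wlt1 i : Wlt w i <= 1 by apply: le_trans (Wle1 i).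
have q_cdf b : q `]-oo, b]%classic = (Phi b)%:E.
  rewrite pleE; congr (_%:E).
  have [Lb|nLb] := pselect (Lam b).
    rewrite qcdf // /wpc_caf mu_w_eq //.
      by move=> i; exact: F_ge0.
    by move=> i j ij; exact: mono.
  have [[x0 [Lx0 x0b]]|nob] := pselect (exists x, Lam x /\ x <= b).
    have hab : forall x, Lam x -> x <= b.
      move=> x Lx; rewrite leNgt; apply/negP => bx; apply: nLb.
      by apply: (LamI x0 x) => //; rewrite x0b ltW.
    rewrite (F_above Lam q LamI qconc b hab) /Phi -w1; apply: eq_bigr => i _.
    rewrite (F_above Lam (p i) LamI (conc i) b hab) (min_r (Wle1 i)) (min_r (Wlt1 i)) WleE.
    by rewrite addrAC subrr add0r.
  have hbel : forall x, Lam x -> b < x.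
    by move=> x Lx; rewrite ltNge; apply/negP => xb; apply: nob; exists x.
  rewrite (F_below Lam q LamI qconc b hbel) /Phi big1 // => i _.
  by rewrite (F_below Lam (p i) LamI (conc i) b hbel) (min_l (Wle0 i)) (min_l (Wlt0 i)) subrr.
have qnu A : measurable A -> q A = nu A.
  exact: (cdf_unique q nu Phi q_cdf nu_cdf).
pose g x := \sum_(i < n.+1) (\1_(S i) x * dens i x).
exists g; split.
  split.
    apply: measurable_sum => i; apply: measurable_funM.
      by apply: measurable_indic; exact: mS.
    exact: (hd i).1.
  split.
    move=> x; apply: sumr_ge0 => i _; apply: mulr_ge0; first by rewrite indicE.
    exact: (hd i).2.1.
  move=> A mA ALam; rewrite qnu // nuE.
  under eq_integral do rewrite /g -sumEFin.
  have hm i : measurable_fun A (fun x => (\1_(S i) x * dens i x)%:E).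
    apply/measurable_EFinP; apply: measurable_funM.
      by apply: measurable_indic; exact: mS.
    exact: measurable_funTS (hd i).1.
  have hp i x : A x -> (0 <= (\1_(S i) x * dens i x)%:E)%E.
    move=> _; rewrite lee_fin; apply: mulr_ge0; first by rewrite indicE.
    exact: (hd i).2.1.
  rewrite (ge0_integral_sum _ mA hm hp).
  apply: eq_bigr => i _.
  rewrite (hd i).2.2; last by move=> x [Ax _]; exact: ALam.
    rewrite integral_mkcondr; apply: eq_integral => x _.
    by rewrite epatch_indic /= EFinM muleC.
  by apply: measurableI => //; exact: mS.
have excl (a : R) (i j : 'I_n.+1) : Lam a -> i != j ->
    Wlt w i <= cdfL (p i) a < Wle w i -> ~ (Wlt w j <= cdfL (p j) a < Wle w j).
  move=> La ij /andP[hi1 hi2] /andP[hj1 hj2].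
  have [lt_ij|lt_ji|eq_ij] := ltngtP i j.
  - have := mono a La i j (ltnW lt_ij); have := WleWlt i j lt_ij; lra.
  - have := mono a La j i (ltnW lt_ji); have := WleWlt j i lt_ji; lra.
  - by move: ij; rewrite (val_inj eq_ij) eqxx.
apply: aeW => a La; split.
  move=> i hi; rewrite /g (bigD1 i) //= big1 ?addr0.
    rewrite indicE mem_set ?mul1r //; split => //; exact/andP.
  move=> j ji; rewrite indicE memNset ?mul0r //.
  move=> [_ hj]; apply: (excl a i j La _ hi); first by rewrite eq_sym.
  exact/andP.
move=> hno; rewrite /g big1 // => i _; rewrite indicE memNset ?mul0r //.
by move=> [_ hi]; apply: (hno i); exact/andP.
Qed.

Theorem mainTheorem13 (R : realType) (Lam : set R) (n : nat)
  (w : 'I_n -> R) (p : 'I_n -> probability (measurableTypeR R) R)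
  (dens : 'I_n -> R -> R) (q : probability (measurableTypeR R) R) :
  is_interval Lam ->
  (forall i, 0 <= w i) -> \sum_(i < n) w i = 1 ->
  (forall i, concentrated Lam (p i)) ->
  (forall i, {within Lam, continuous (cdfL (p i))}) ->
  (forall i, has_density Lam (p i) (dens i)) ->
  (forall a, Lam a -> forall i j : 'I_n, (i <= j)%N -> cdfL (p j) a <= cdfL (p i) a) ->
  (* q = psi(p): the probability measure on Lambda whose CDF is Psi(P) *)
  concentrated Lam q ->
  (forall a, Lam a -> cdfL q a = wpc_caf w (fun i => cdfL (p i)) a) ->
  exists g : R -> R, has_density Lam q g /\
    {ae lebesgue_measure, forall a : R, Lam a ->
       (forall i, Wlt w i <= cdfL (p i) a < Wle w i -> g a = dens i a) /\
       ((forall i, ~ (Wlt w i <= cdfL (p i) a < Wle w i)) -> g a = 0)}.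
Proof.
case: n w p dens => [|n] w p dens.
  by move=> _ _; rewrite big_ord0 => /esym/eqP; rewrite oner_eq0.
exact: aux.
Qed.
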